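(* Let $0<p<1$ and $\alpha>-1$, and consider the urn transfer process described in the context (the $p_k$-model), assumed well defined, i.e. $0\le p_{k+1}\le1$ at every stage. Let $\beta=\frac{1-p}{1+\alpha p}$ and define $(f_i)_{i\ge1}$ by $$f_1=\frac{p}{1+\beta(1+\alpha)},\qquad f_i=\frac{\beta(i-1+\alpha)}{1+\beta(i+\alpha)}\,f_{i-1}\quad(i>1).$$ Then for every $i\ge1$, $$\lim_{k\to\infty}\frac{E(F_i(k))}{k}=f_i.$$
   Context: Urn transfer model ($p_k$-model). There are countably many urns $urn_1,urn_2,\dots$; each ball in $urn_i$ carries $i$ pins. Let $F_i(k)$ be the number of balls in $urn_i$ after $k$ steps. Initially $F_1(1)=1$ and $F_i(1)=0$ for $i>1$. At stage $k+1$ ($k\ge1$): (i) with probability $$p_{k+1}=1-\frac{(1-p)\sum_{i=1}^k (i+\alpha)F_i(k)}{k(1+\alpha p)+\alpha(1-p)},$$ a new ball is added to $urn_1$; (ii) with probability $1-p_{k+1}$, $urn_i$ is chosen with probability $\frac{(1-p)(i+\alpha)F_i(k)}{k(1+\alpha p)+\alpha(1-p)}$ ($1\le i\le k$), and one ball from $urn_i$ is transferred to $urn_{i+1}$. The process is only defined when $0\le p_{k+1}\le1$ at each stage. $E$ denotes expectation over the randomness of the process. *)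

(* Defs.v *)
From Stdlib Require Import Reals List.
From Coquelicot Require Import Coquelicot.
Open Scope R_scope.

(* A configuration: F i = number of balls in urn_i (urns indexed from 1). *)
Definition state := nat -> nat.

Definition init_state : state := fun i => if Nat.eqb i 1 then 1%nat else 0%nat.

Definition sumR (l : list R) : R := fold_right Rplus 0 l.

Definition denom (p alpha : R) (k : nat) : R := INR k * (1 + alpha * p) + alpha * (1 - p).

(* probability that urn_i is chosen (for transfer) at stage k+1, given F(k) *)
Definition choose_prob (p alpha : R) (k : nat) (F : state) (i : nat) : R :=
  (1 - p) * (INR i + alpha) * INR (F i) / denom p alpha k.

Definition p_next (p alpha : R) (k : nat) (F : state) : R :=
  1 - sumR (map (choose_prob p alpha k F) (seq 1 k)).

Definition add_ball (F : state) : state :=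
  fun j => if Nat.eqb j 1 then S (F j) else F j.

Definition transfer (F : state) (i : nat) : state :=
  fun j => if Nat.eqb j i then pred (F j)
           else if Nat.eqb j (S i) then S (F j) else F j.

(* One stage k -> k+1 acting on a finitely supported distribution
   (list of (probability weight, configuration)). *)
Definition step (p alpha : R) (k : nat) (d : list (R * state)) : list (R * state) :=
  flat_map (fun wF : R * state =>
              let (w, F) := wF in
              (w * p_next p alpha k F, add_ball F)
                :: map (fun i => (w * choose_prob p alpha k F i, transfer F i)) (seq 1 k))
           d.

(* urn_dist p alpha n = law of the configuration after step k = n+1. *)
Fixpoint urn_dist (p alpha : R) (n : nat) : list (R * state) :=
  match n with
  | O => (1, init_state) :: nil
  | S m => step p alpha (S m) (urn_dist p alpha m)
  end.

Definition expect (i : nat) (d : list (R * state)) : R :=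
  sumR (map (fun wF : R * state => fst wF * INR (snd wF i)) d).

Definition well_defined (p alpha : R) : Prop :=
  forall (n : nat) (w : R) (F : state),
    In (w, F) (urn_dist p alpha n) -> 0 < w ->
    0 <= p_next p alpha (S n) F <= 1.

Definition beta (p alpha : R) : R := (1 - p) / (1 + alpha * p).

(* fpos p alpha n = f_{n+1} *)
Fixpoint fpos (p alpha : R) (n : nat) : R :=
  match n with
  | O => p / (1 + beta p alpha * (1 + alpha))
  | S m => beta p alpha * (INR (S (S m)) - 1 + alpha)
           / (1 + beta p alpha * (INR (S (S m)) + alpha)) * fpos p alpha m
  end.

Definition f_lim (p alpha : R) (i : nat) : R := fpos p alpha (i - 1).

(* Main.v *)
Require Import Defs.
From Stdlib Require Import Reals List Lia Lra.
From Coquelicot Require Import Coquelicot.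
Open Scope R_scope.

Lemma lim_invS : is_lim_seq (fun n => / INR (S n)) 0.
Proof.
  apply (is_lim_seq_incr_1 (fun n => / INR n) 0).
  pose proof (is_lim_seq_inv INR p_infty is_lim_seq_INR) as H.
  simpl in H. apply H. discriminate.
Qed.

Lemma INRS_pos n : 0 < INR (S n).
Proof. apply lt_0_INR; lia. Qed.

Lemma sub_key (z e s : nat -> R) (N : nat) :
  (forall n, (N <= n)%nat -> z (S n) = (1 - s n) * z n + e n) ->
  is_lim_seq s 0 -> is_lim_seq e 0 -> (forall n, 0 <= s n) ->
  is_lim_seq (fun n => z n / INR (S n)) 0.
Proof.
  intros Hr Hs He Hpos.
  apply is_lim_seq_spec. intro eps.
  apply is_lim_seq_spec in Hs. apply is_lim_seq_spec in He.
  destruct (Hs (mkposreal 1 Rlt_0_1)) as [N1 H1].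
  assert (he2 : 0 < eps/2) by (destruct eps; simpl; lra).
  destruct (He (mkposreal _ he2)) as [N2 H2].
  set (M := (N + N1 + N2)%nat).
  assert (Hind : forall t, Rabs (z (M + t)%nat) <= Rabs (z M) + INR t * (eps/2)).
  { induction t.
    - rewrite Nat.add_0_r. simpl. lra.
    - replace (M + S t)%nat with (S (M + t)) by lia.
      rewrite Hr by lia.
      specialize (H1 (M+t)%nat ltac:(lia)). specialize (H2 (M+t)%nat ltac:(lia)).
      simpl in H1, H2. rewrite Rminus_0_r in H1, H2.
      specialize (Hpos (M+t)%nat).
      apply Rabs_def2 in H1.
      rewrite S_INR.
      eapply Rle_trans. apply Rabs_triang.
      rewrite Rabs_mult. rewrite (Rabs_pos_eq (1 - s (M+t)%nat)) by lra.
      assert (0 <= Rabs (z (M+t)%nat)) by apply Rabs_pos.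
      nra. }
  assert (Hc : is_lim_seq (fun n => Rabs (z M) * / INR (S n)) 0).
  { pose proof (is_lim_seq_scal_l _ (Rabs (z M)) _ lim_invS) as H. simpl in H.
    rewrite Rmult_0_r in H. exact H. }
  apply is_lim_seq_spec in Hc. destruct (Hc (mkposreal _ he2)) as [N3 H3].
  exists (M + N3)%nat. intros n Hn.
  specialize (H3 n ltac:(lia)). cbn -[INR] in H3. rewrite Rminus_0_r in H3.
  rewrite Rminus_0_r.
  pose proof (INRS_pos n) as HI.
  rewrite Rabs_pos_eq in H3.
  2:{ apply Rmult_le_pos. apply Rabs_pos. left. apply Rinv_0_lt_compat. exact HI. }
  replace n with (M + (n - M))%nat in * by lia.
  set (t := (n - M)%nat) in *.
  specialize (Hind t).
  assert (Ht : INR t <= INR (S (M + t))) by (apply le_INR; lia).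
  set (I := INR (S (M+t))) in *.
  unfold Rdiv. rewrite Rabs_mult. rewrite (Rabs_pos_eq (/ I)) by (left; apply Rinv_0_lt_compat; lra).
  apply (Rmult_lt_reg_r I). lra.
  rewrite Rmult_assoc, Rinv_l by lra. rewrite Rmult_1_r. idtac.
  assert (Rabs (z M) < eps/2 * I).
  { apply (Rmult_lt_reg_r (/ I)). apply Rinv_0_lt_compat; lra.
    rewrite Rmult_assoc, Rinv_r by lra. lra. }
  destruct eps as [eps ep]; simpl in *.
  assert (INR t * (eps/2) <= I * (eps/2)) by (apply Rmult_le_compat_r; lra). lra.
Qed.

Lemma key (x s c : nat -> R) (b cl L : R) (N : nat) :
  (forall n, (N <= n)%nat -> x (S n) = (1 - s n) * x n + c n) ->
  (forall n, 0 <= s n) ->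
  is_lim_seq (fun n => INR (S n) * s n) b ->
  is_lim_seq c cl -> L * (1 + b) = cl ->
  is_lim_seq (fun n => x n / INR (S n)) L.
Proof.
  intros Hr Hpos Hb Hc HL.
  assert (Hs : is_lim_seq s 0).
  { pose proof (is_lim_seq_mult' _ _ _ _ Hb lim_invS) as H. rewrite Rmult_0_r in H.
    eapply is_lim_seq_ext; [|exact H]. intro n.
    pose proof (INRS_pos n). cbv beta. field. lra. }
  set (e := fun n => c n - L - L * (INR (S n) * s n)).
  assert (He : is_lim_seq e 0).
  { pose proof (is_lim_seq_minus' _ _ _ _ (is_lim_seq_minus' _ _ _ _ Hc (is_lim_seq_const L))
       (is_lim_seq_scal_l _ L _ Hb)) as H. simpl in H.
    replace 0 with (cl - L - L * b) by (rewrite <- HL; ring). exact H. }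
  set (z := fun n => x n - L * INR (S n)).
  assert (Hz : is_lim_seq (fun n => z n / INR (S n)) 0).
  { apply (sub_key z e s N); auto.
    intros n Hn. unfold z, e. rewrite Hr by auto. rewrite (S_INR (S n)). ring. }
  pose proof (is_lim_seq_plus' _ _ _ _ Hz (is_lim_seq_const L)) as H.
  rewrite Rplus_0_l in H. eapply is_lim_seq_ext; [|exact H].
  intro n. unfold z. pose proof (INRS_pos n). field. lra.
Qed.

Lemma lim_ratio (K A B : R) : A <> 0 -> (forall n, INR (S n) * A + B <> 0) ->
  is_lim_seq (fun n => INR (S n) * (K / (INR (S n) * A + B))) (K / A).
Proof.
  intros HA HD.
  pose proof (is_lim_seq_plus' _ _ _ _ (is_lim_seq_const A) (is_lim_seq_scal_l _ B _ lim_invS)) as H.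
  simpl in H. rewrite Rmult_0_r, Rplus_0_r in H.
  pose proof (is_lim_seq_inv _ _ H) as H2. simpl in H2.
  assert (H3 : is_lim_seq (fun n => / (A + B * / INR (S n))) (/ A)).
  { apply H2. intro h. injection h. auto. }
  pose proof (is_lim_seq_scal_l _ K _ H3) as H4. cbn -[INR] in H4.
  eapply is_lim_seq_ext; [|exact H4]. intro n. cbv beta.
  pose proof (INRS_pos n). specialize (HD n).
  field. split; [exact HD | lra].
Qed.

Fixpoint sm (f : nat -> R) (n : nat) : R :=
  match n with O => 0 | S m => sm f m + f (S m) end.

Definition rng (k i : nat) : bool := andb (Nat.leb 1 i) (Nat.leb i k).

Definition acoef (p alpha : R) (k i : nat) : R := (1 - p) * (INR i + alpha) / denom p alpha k.

Ltac bdestr := repeat match goal with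
  | |- context [Nat.leb ?a ?b] => destruct (Nat.leb_spec0 a b)
  | |- context [Nat.eqb ?a ?b] => destruct (Nat.eqb_spec a b)
  end; cbn [andb].

Lemma sumR_app l1 l2 : sumR (l1 ++ l2) = sumR l1 + sumR l2.
Proof. induction l1; simpl; [ring| rewrite IHl1; ring]. Qed.

Lemma sumR_seq1 f k : sumR (map f (seq 1 k)) = sm f k.
Proof.
  induction k. reflexivity.
  rewrite seq_S, map_app, sumR_app, IHk. simpl. ring.
Qed.

Lemma sm_ext_rng f g k : (forall i, (1 <= i <= k)%nat -> f i = g i) -> sm f k = sm g k.
Proof. induction k; intros H; simpl; auto. rewrite IHk by (intros; apply H; lia). rewrite H by lia. ring. Qed.

Lemma sm_ext f g k : (forall i, f i = g i) -> sm f k = sm g k.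
Proof. intros; apply sm_ext_rng; auto. Qed.

Lemma sm_comb f1 f2 f3 f4 k : sm (fun i => f1 i + f2 i - f3 i + f4 i) k = sm f1 k + sm f2 k - sm f3 k + sm f4 k.
Proof. induction k; simpl; [ring|rewrite IHk; ring]. Qed.

Lemma sm_zero k : sm (fun _ => 0) k = 0.
Proof. induction k; simpl; [ring|rewrite IHk; ring]. Qed.

Lemma sm_plus f1 f2 k : sm (fun i => f1 i + f2 i) k = sm f1 k + sm f2 k.
Proof. induction k; simpl; [ring|rewrite IHk; ring]. Qed.

Lemma sm_scal c f k : sm (fun i => c * f i) k = c * sm f k.
Proof. induction k; simpl; [ring|rewrite IHk; ring]. Qed.

Lemma sm_delta (g : nat -> R) j k :
  sm (fun i => if Nat.eqb j i then g i else 0) k = if rng k j then g j else 0.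
Proof.
  unfold rng. induction k; cbn [sm].
  - destruct j; simpl; auto. 
  - rewrite IHk. bdestr; subst; try lia; try ring.
Qed.

Lemma sm_delta_shift (g : nat -> R) j k :
  sm (fun i => if Nat.eqb j (S i) then g i else 0) k = if rng k (j-1) then g (j-1)%nat else 0.
Proof.
  unfold rng. induction k; cbn [sm].
  - destruct j as [|[|j]]; simpl; auto.
  - rewrite IHk. bdestr; subst; try lia; try ring.
    replace (S (S k) - 1)%nat with (S k) by lia. ring.
Qed.

Lemma expect_flat j g (d : list (R * state)) :
  expect j (flat_map g d) = sumR (map (fun x => expect j (g x)) d).
Proof.
  induction d; simpl. reflexivity.
  unfold expect in *. rewrite map_app, sumR_app, IHd. reflexivity.
Qed.

Lemma sumR_scal w (f : nat -> R) l : sumR (map (fun i => w * f i) l) = w * sumR (map f l).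
Proof. induction l; simpl; [ring|rewrite IHl; ring]. Qed.

Lemma choose_acoef p alpha k F i : choose_prob p alpha k F i = acoef p alpha k i * INR (F i).
Proof. unfold choose_prob, acoef, Rdiv. ring. Qed.

Lemma p_next_sm p alpha k F : p_next p alpha k F = 1 - sm (fun i => acoef p alpha k i * INR (F i)) k.
Proof. unfold p_next. rewrite sumR_seq1. f_equal. apply sm_ext. intro; apply choose_acoef. Qed.

Lemma transfer_pt p alpha k F i j w :
  w * choose_prob p alpha k F i * INR (transfer F i j) =
  w * choose_prob p alpha k F i * INR (F j)
  - (if Nat.eqb j i then w * choose_prob p alpha k F i else 0)
  + (if Nat.eqb j (S i) then w * choose_prob p alpha k F i else 0).
Proof.
  unfold transfer. destruct (Nat.eqb_spec j i).
  - subst. rewrite (proj2 (Nat.eqb_neq i (S i))) by lia.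
    rewrite choose_acoef. destruct (F i) eqn:E.
    + simpl. ring.
    + simpl Nat.pred. rewrite S_INR. ring.
  - destruct (Nat.eqb_spec j (S i)).
    + rewrite S_INR. ring.
    + ring.
Qed.

Lemma per_elem p alpha k w F j :
  expect j ((w * p_next p alpha k F, add_ball F)
              :: map (fun i => (w * choose_prob p alpha k F i, transfer F i)) (seq 1 k)) =
  w * INR (F j) + (if Nat.eqb 1 j then w * p_next p alpha k F else 0)
  - (if rng k j then acoef p alpha k j * (w * INR (F j)) else 0)
  + (if rng k (j-1) then acoef p alpha k (j-1) * (w * INR (F (j-1)%nat)) else 0).
Proof.
  unfold expect, sumR. cbn [map fold_right fst snd]. rewrite map_map. cbn [fst snd].
  change (fold_right Rplus 0 (map (fun x => w * choose_prob p alpha k F x * INR (transfer F x j)) (seq 1 k)))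
    with (sumR (map (fun x => w * choose_prob p alpha k F x * INR (transfer F x j)) (seq 1 k))).
  rewrite sumR_seq1.
  rewrite (sm_ext _ (fun i => w * choose_prob p alpha k F i * INR (F j)
      + 0 - (if Nat.eqb j i then w * choose_prob p alpha k F i else 0)
      + (if Nat.eqb j (S i) then w * choose_prob p alpha k F i else 0))).
  2:{ intro i. rewrite transfer_pt. ring. }
  rewrite sm_comb, sm_delta, sm_delta_shift.
  rewrite (sm_ext (fun i => w * choose_prob p alpha k F i * INR (F j)) (fun i => (w * INR (F j)) * (acoef p alpha k i * INR (F i)))).
  2:{ intro i. rewrite choose_acoef. ring. }
  rewrite sm_scal, sm_zero.
  assert (Hp := p_next_sm p alpha k F).
  unfold add_ball. rewrite (Nat.eqb_sym 1 j). rewrite ?choose_acoef. rewrite Hp.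
  destruct (Nat.eqb_spec j 1).
  - subst. cbn [Nat.eqb]. rewrite S_INR.
    destruct (rng k 1); destruct (rng k (1-1)); ring.
  - destruct (rng k j); destruct (rng k (j-1)); ring.
Qed.

Definition weight (d : list (R * state)) : R := sumR (map fst d).

Lemma expect_cons j w F d : expect j ((w, F) :: d) = w * INR (F j) + expect j d.
Proof. reflexivity. Qed.

Lemma step_expect p alpha k d j :
  expect j (step p alpha k d) =
  expect j d + (if Nat.eqb 1 j then weight d - sm (fun i => acoef p alpha k i * expect i d) k else 0)
  - (if rng k j then acoef p alpha k j * expect j d else 0)
  + (if rng k (j-1) then acoef p alpha k (j-1) * expect (j-1) d else 0).
Proof.
  unfold step. rewrite expect_flat. induction d as [|[w F] d IH].
  - cbn [map sumR fold_right]. unfold weight, expect. cbn [map fold_right sumR].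
    rewrite (sm_ext _ (fun _ => 0)) by (intro; ring). rewrite sm_zero.
    destruct (Nat.eqb 1 j); destruct (rng k j); destruct (rng k (j-1)); ring.
  - cbn [map]. change (sumR (?a :: ?l)) with (a + sumR l). rewrite IH. clear IH.
    cbv beta iota. rewrite per_elem.
    rewrite !expect_cons.
    change (weight ((w, F) :: d)) with (w + weight d).
    rewrite (sm_ext (fun i => acoef p alpha k i * expect i ((w, F) :: d))
      (fun i => w * (acoef p alpha k i * INR (F i)) + acoef p alpha k i * expect i d))
      by (intro; rewrite expect_cons; ring).
    rewrite sm_plus, sm_scal, p_next_sm.
    destruct (Nat.eqb 1 j); destruct (rng k j); destruct (rng k (j-1)); ring.
Qed.

Lemma step_weight p alpha k d : weight (step p alpha k d) = weight d.
Proof.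
  unfold step. induction d as [|[w F] d IH]. reflexivity.
  simpl flat_map. unfold weight in *. rewrite app_comm_cons, map_app, sumR_app, IH.
  cbn [map fst sumR fold_right]. rewrite map_map. cbn [fst].
  change (fold_right Rplus 0 (map (fun x => w * choose_prob p alpha k F x) (seq 1 k)))
    with (sumR (map (fun x => w * choose_prob p alpha k F x) (seq 1 k))).
  rewrite sumR_scal. unfold p_next. change (fold_right Rplus 0 (map fst d)) with (sumR (map fst d)). ring.
Qed.

Lemma rng_true k i : (1 <= i <= k)%nat -> rng k i = true.
Proof. intros. unfold rng. bdestr; auto; lia. Qed.
Lemma rng_false k i : ~ (1 <= i <= k)%nat -> rng k i = false.
Proof. intros. unfold rng. bdestr; auto; lia. Qed.

Lemma tel_w (A : nat -> R) m :
  sm (fun i => INR i * A (i-1)%nat) (S m) - sm (fun i => INR i * A i) (S m)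
  = sm A m + A 0%nat - INR (S m) * A (S m).
Proof.
  induction m.
  - cbn [sm]. replace (1-1)%nat with 0%nat by lia. simpl INR. ring.
  - cbn [sm] in *. replace (S (S m) - 1)%nat with (S m) by lia.
    replace (S m - 1)%nat with m in IHm by lia.
    replace (S m - 1)%nat with m by lia.
    rewrite (S_INR (S m)).
    match type of IHm with ?L = _ =>
      transitivity (L + (INR (S m) + 1) * A (S m) - (INR (S m) + 1) * A (S (S m))) end.
    ring. rewrite IHm. ring.
Qed.

Lemma shiftA (A : nat -> R) m : sm (fun i => A (i-1)%nat) (S m) = A 0%nat + sm A m.
Proof.
  induction m. cbn [sm]. simpl. ring.
  cbn [sm] in *. rewrite IHm. replace (S (S m) - 1)%nat with (S m) by lia. ring.
Qed.

Section Urn.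
Variables p alpha : R.
Hypothesis Hp : 0 < p < 1.
Hypothesis Ha : -1 < alpha.

Definition e n j := expect j (urn_dist p alpha n).
Definition Q n := sm (fun i => acoef p alpha (S n) i * e n i) (S n).
Definition A n i := if rng (S n) i then acoef p alpha (S n) i * e n i else 0.

Lemma weight_urn n : weight (urn_dist p alpha n) = 1.
Proof.
  induction n. unfold weight; simpl. ring.
  change (urn_dist p alpha (S n)) with (step p alpha (S n) (urn_dist p alpha n)).
  rewrite step_weight. exact IHn.
Qed.

Lemma eS n j : e (S n) j = e n j + (if Nat.eqb 1 j then 1 - Q n else 0) - A n j + A n (j-1).
Proof.
  unfold e, Q, A.
  change (urn_dist p alpha (S n)) with (step p alpha (S n) (urn_dist p alpha n)).
  rewrite step_expect, weight_urn. reflexivity.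
Qed.

Lemma e0 j : e 0 j = if Nat.eqb 1 j then 1 else 0.
Proof.
  unfold e, expect, sumR. cbn [urn_dist map fold_right fst snd]. unfold init_state.
  rewrite Nat.eqb_sym. destruct (Nat.eqb 1 j); simpl; ring.
Qed.

Lemma supp n j : (j = 0 \/ S n < j)%nat -> e n j = 0.
Proof.
  revert j. induction n; intros j Hj.
  - rewrite e0. destruct (Nat.eqb_spec 1 j); auto. lia.
  - rewrite eS. rewrite IHn by lia. unfold A.
    rewrite (rng_false (S n) j) by lia. rewrite (rng_false (S n) (j-1)) by lia.
    destruct (Nat.eqb_spec 1 j). lia. ring.
Qed.

Lemma denom_pos k : (1 <= k)%nat -> 0 < denom p alpha k.
Proof.
  intros Hk. unfold denom.
  assert (1 <= INR k) by (apply (le_INR 1); lia).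
  assert (0 < 1 + alpha * p) by nra.
  nra.
Qed.

Lemma Q_form n : Q n = (1 - p) / denom p alpha (S n) *
  (sm (fun i => INR i * e n i) (S n) + alpha * sm (e n) (S n)).
Proof.
  unfold Q. rewrite (sm_ext _ (fun i => ((1 - p) / denom p alpha (S n)) * (INR i * e n i)
     + ((1 - p) / denom p alpha (S n) * alpha) * e n i)).
  2:{ intro i. unfold acoef, Rdiv. ring. }
  rewrite sm_plus, !sm_scal. ring.
Qed.

Lemma QA n : sm (A n) (S n) = Q n.
Proof.
  unfold Q. apply sm_ext_rng. intros i Hi. unfold A. rewrite rng_true by lia. reflexivity.
Qed.

Lemma sums n : sm (fun i => INR i * e n i) (S n) = INR (S n) /\ sm (e n) (S n) = p * INR n + 1
   /\ Q n = 1 - p.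
Proof.
  assert (HQ : forall n, sm (fun i => INR i * e n i) (S n) = INR (S n) ->
     sm (e n) (S n) = p * INR n + 1 -> Q n = 1 - p).
  { intros m H1 H2. rewrite Q_form, H1, H2.
    pose proof (denom_pos (S m) ltac:(lia)) as HD. unfold denom in *.
    rewrite S_INR in *. field. lra. }
  induction n.
  - assert (H1 : sm (fun i => INR i * e 0 i) 1 = INR 1) by (cbn [sm]; rewrite e0; simpl; ring).
    assert (H2 : sm (e 0) 1 = p * INR 0 + 1) by (cbn [sm]; rewrite e0; simpl; ring).
    auto.
  - destruct IHn as [H1 [H2 H3]].
    assert (Hz : e n (S (S n)) = 0) by (apply supp; lia).
    assert (HA0 : A n 0 = 0) by reflexivity.
    assert (HAS : A n (S (S n)) = 0) by (unfold A; rewrite rng_false by lia; reflexivity).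
    assert (Hd : sm (fun i => if Nat.eqb 1 i then 1 - Q n else 0) (S (S n)) = 1 - Q n).
    { pose proof (sm_delta (fun _ => 1 - Q n) 1 (S (S n))) as H. cbv beta in H.
      rewrite H, rng_true by lia. reflexivity. }
    assert (S1 : sm (fun i => INR i * e (S n) i) (S (S n)) = INR (S (S n))).
    { rewrite (sm_ext _ (fun i => INR i * e n i + (if Nat.eqb 1 i then 1 - Q n else 0)
         - INR i * A n i + INR i * A n (i-1)%nat)).
      2:{ intro i. rewrite eS. destruct (Nat.eqb_spec 1 i). subst. simpl. ring. ring. }
      rewrite sm_comb, Hd.
      change (sm (fun i => INR i * e n i) (S (S n))) with (sm (fun i => INR i * e n i) (S n) + INR (S (S n)) * e n (S (S n))).
      rewrite Hz, H1.
      replace (INR (S n) + INR (S (S n)) * 0 + (1 - Q n) - sm (fun i => INR i * A n i) (S (S n)) +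
        sm (fun i => INR i * A n (i - 1)%nat) (S (S n))) with
        (INR (S n) + (1 - Q n) + (sm (fun i => INR i * A n (i - 1)%nat) (S (S n)) - sm (fun i => INR i * A n i) (S (S n)))) by ring.
      rewrite tel_w. rewrite QA, HA0, HAS. rewrite (S_INR (S n)). ring. }
    assert (S2 : sm (e (S n)) (S (S n)) = p * INR (S n) + 1).
    { rewrite (sm_ext _ (fun i => e n i + (if Nat.eqb 1 i then 1 - Q n else 0)
         - A n i + A n (i-1)%nat)) by (intro; apply eS).
      rewrite sm_comb, Hd, shiftA.
      change (sm (e n) (S (S n))) with (sm (e n) (S n) + e n (S (S n))).
      change (sm (A n) (S (S n))) with (sm (A n) (S n) + A n (S (S n))).
      rewrite QA, HA0, HAS, Hz, H2, H3, S_INR. ring. }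
    auto.
Qed.
End Urn.

Lemma acoef_nonneg p alpha k j : 0 < p < 1 -> -1 < alpha -> (1 <= k)%nat -> (1 <= j)%nat ->
  0 <= acoef p alpha k j.
Proof.
  intros Hp Ha Hk Hj. unfold acoef.
  pose proof (denom_pos p alpha Hp Ha k Hk).
  assert (1 <= INR j) by (apply (le_INR 1); lia).
  apply Rmult_le_pos. apply Rmult_le_pos; lra. left; apply Rinv_0_lt_compat; lra.
Qed.

Lemma lim_a p alpha j : 0 < p < 1 -> -1 < alpha ->
  is_lim_seq (fun n => INR (S n) * acoef p alpha (S n) j) (beta p alpha * (INR j + alpha)).
Proof.
  intros Hp Ha.
  assert (H1 : 0 < 1 + alpha * p) by nra.
  replace (beta p alpha * (INR j + alpha)) with (((1 - p) * (INR j + alpha)) / (1 + alpha * p))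
    by (unfold beta; field; lra).
  apply (lim_ratio _ _ (alpha * (1 - p))). lra.
  intro n. pose proof (denom_pos p alpha Hp Ha (S n) ltac:(lia)). unfold denom in *. lra.
Qed.

Lemma beta_pos p alpha : 0 < p < 1 -> -1 < alpha -> 0 < beta p alpha.
Proof.
  intros. unfold beta. assert (0 < 1 + alpha * p) by nra.
  apply Rmult_lt_0_compat. lra. apply Rinv_0_lt_compat; lra.
Qed.

Lemma lim_all p alpha : 0 < p < 1 -> -1 < alpha -> forall m,
  is_lim_seq (fun n => e p alpha n (S m) / INR (S n)) (fpos p alpha m).
Proof.
  intros Hp Ha m. pose proof (beta_pos p alpha Hp Ha) as Hb.
  induction m.
  - apply (key (fun n => e p alpha n 1) (fun n => acoef p alpha (S n) 1) (fun _ => p)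
             (beta p alpha * (INR 1 + alpha)) p _ 0).
    + intros n _. rewrite eS by auto.
      destruct (sums p alpha Hp Ha n) as [_ [_ HQ]]. rewrite HQ.
      unfold A. rewrite rng_true by lia. rewrite (rng_false (S n) (1-1)) by lia.
      cbn [Nat.eqb]. ring.
    + intro n. apply acoef_nonneg; auto; lia.
    + apply lim_a; auto.
    + apply is_lim_seq_const.
    + cbn [fpos]. simpl INR. field.
      assert (0 < beta p alpha * (1 + alpha)) by (apply Rmult_lt_0_compat; lra). lra.
  - apply (key (fun n => e p alpha n (S (S m))) (fun n => acoef p alpha (S n) (S (S m)))
             (fun n => acoef p alpha (S n) (S m) * e p alpha n (S m))
             (beta p alpha * (INR (S (S m)) + alpha))
             (beta p alpha * (INR (S m) + alpha) * fpos p alpha m) _ (S m)).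
    + intros n Hn. rewrite eS by auto.
      unfold A. rewrite !rng_true by lia.
      replace (S (S m) - 1)%nat with (S m) by lia.
      cbn [Nat.eqb]. ring.
    + intro n. apply acoef_nonneg; auto; lia.
    + apply lim_a; auto.
    + eapply is_lim_seq_ext; [| exact (is_lim_seq_mult' _ _ _ _ (lim_a p alpha (S m) Hp Ha) IHm)].
      intro n. cbv beta. pose proof (INRS_pos n). field. lra.
    + cbn [fpos]. rewrite (S_INR (S m)).
      assert (1 <= INR (S m)) by (apply (le_INR 1); lia).
      assert (0 < beta p alpha * (INR (S m) + 1 + alpha)) by (apply Rmult_lt_0_compat; lra).
      field. lra.
Qed.

Theorem theoremA4 (p alpha : R) :
  0 < p < 1 -> -1 < alpha -> well_defined p alpha ->
  forall i : nat, (1 <= i)%nat ->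
    is_lim_seq (fun n : nat => expect i (urn_dist p alpha n) / INR (S n))
               (Finite (f_lim p alpha i)).
Proof.
  intros Hp Ha _ i Hi. destruct i as [|m]. lia.
  unfold f_lim. replace (S m - 1)%nat with m by lia.
  exact (lim_all p alpha Hp Ha m).
Qed.
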